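(* Let $\mathcal{C}\subseteq\mathcal{I}$ and let $f$ be a monotone and subadditive set function on subsets of $\mathcal{I}$ with nonnegative real values. Then the answer-dependent pricing function $p(\mathbf{Q},E)=f(\overline{\mathcal{S}}_{\mathbf{Q}}(E)\cap\mathcal{C})$ is arbitrage-free.
   Context: $\mathcal{I}$ is a countable nonempty set of database instances; queries are deterministic functions on $\mathcal{I}$; a query bundle is a finite tuple of queries from a language $\mathcal{L}$, evaluated componentwise; $B(\mathcal{L})$ is the set of bundles, closed under concatenation; $E$ ranges over $\{\mathbf{Q}(D):D\in\mathcal{I}\}$. Conflict set: $\overline{\mathcal{S}}_{\mathbf{Q}}(E)=\{D'\in\mathcal{I}:\mathbf{Q}(D')\ne E\}$. $f$ monotone: $A\subseteq B\Rightarrow f(A)\le f(B)$; subadditive: $f(A\cup B)\le f(A)+f(B)$. An answer-dependent pricing function $p$ is arbitrage-free if (i) for every $D\in\mathcal{I}$ and bundles $\mathbf{Q}_1,\mathbf{Q}_2$, if every $D'\in\mathcal{I}$ with $\mathbf{Q}_2(D')=\mathbf{Q}_2(D)$ satisfies $\mathbf{Q}_1(D')=\mathbf{Q}_1(D)$, then $p(\mathbf{Q}_2,\mathbf{Q}_2(D))\ge p(\mathbf{Q}_1,\mathbf{Q}_1(D))$; and (ii) for every $D$, $p(\mathbf{Q},\mathbf{Q}(D))\le p(\mathbf{Q}_1,\mathbf{Q}_1(D))+p(\mathbf{Q}_2,\mathbf{Q}_2(D))$ where $\mathbf{Q}=\mathbf{Q}_1,\mathbf{Q}_2$. *)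

(* Defs.v *)
From Stdlib Require Import Reals List.
Open Scope R_scope.

(* Queries: deterministic functions I -> V over a common answer domain V.  A bundle is a finite list
   of queries of L, evaluated componentwise; concatenation is (++). *)

Definition countable (I : Type) : Prop :=
  exists enc : I -> nat, forall x y, enc x = enc y -> x = y.

Definition query (I V : Type) := I -> V.

Definition bundle (I V : Type) := list (query I V).

Definition in_B {I V} (L : query I V -> Prop) (Q : bundle I V) : Prop :=
  Forall L Q.

Definition eval {I V} (Q : bundle I V) (D : I) : list V :=
  map (fun q => q D) Q.

Definition iset (I : Type) := I -> Prop.

Definition subset {I} (A B : iset I) : Prop := forall x, A x -> B x.
Definition union {I} (A B : iset I) : iset I := fun x => A x \/ B x.
Definition inter {I} (A B : iset I) : iset I := fun x => A x /\ B x.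

Definition monotone {I} (f : iset I -> R) : Prop :=
  forall A B, subset A B -> f A <= f B.
Definition subadditive {I} (f : iset I -> R) : Prop :=
  forall A B, f (union A B) <= f A + f B.
Definition nonneg_fun {I} (f : iset I -> R) : Prop := forall A, 0 <= f A.

Definition conflict {I V} (Q : bundle I V) (E : list V) : iset I :=
  fun D' => eval Q D' <> E.

Definition pricing (I V : Type) := bundle I V -> list V -> R.

Definition arbitrage_free {I V} (L : query I V -> Prop) (p : pricing I V) : Prop :=
  (forall (D : I) (Q1 Q2 : bundle I V), in_B L Q1 -> in_B L Q2 ->
     (forall D' : I, eval Q2 D' = eval Q2 D -> eval Q1 D' = eval Q1 D) ->
     p Q2 (eval Q2 D) >= p Q1 (eval Q1 D)) /\
  (forall (D : I) (Q1 Q2 : bundle I V), in_B L Q1 -> in_B L Q2 ->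
     p (Q1 ++ Q2) (eval (Q1 ++ Q2) D) <= p Q1 (eval Q1 D) + p Q2 (eval Q2 D)).

Definition conflict_price {I V} (C : iset I) (f : iset I -> R) : pricing I V :=
  fun Q E => f (inter (conflict Q E) C).

(* Main.v *)
Require Import Defs.
From Stdlib Require Import Reals List Classical.
Open Scope R_scope.

Lemma eval_app {I V} (Q1 Q2 : bundle I V) D : eval (Q1++Q2) D = eval Q1 D ++ eval Q2 D.
Proof. unfold eval. apply map_app. Qed.

Theorem lemma23 (I V : Type) (Hcount : countable I) (Hne : inhabited I)
  (L : query I V -> Prop) (C : iset I) (f : iset I -> R) :
  monotone f -> subadditive f -> nonneg_fun f ->
  arbitrage_free L (conflict_price C f).
Proof.
  intros Hm Hs Hn. split.
  - intros D Q1 Q2 _ _ H. unfold conflict_price. apply Rle_ge. apply Hm.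
    intros x [Hx Hc]. split; [|exact Hc]. unfold conflict in *.
    intro E. apply Hx. apply H. exact E.
  - intros D Q1 Q2 _ _. unfold conflict_price.
    eapply Rle_trans; [|apply Hs]. apply Hm.
    intros x [Hx Hc]. unfold conflict, union, inter in *.
    destruct (classic (eval Q1 x = eval Q1 D)) as [E1|E1].
    + right. split; [|exact Hc]. intro E2. apply Hx.
      rewrite !eval_app, E1, E2. reflexivity.
    + left. split; assumption.
Qed.
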